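(* Let $\Pi$ be a cGAP such that no predicate symbol appearing in the head of its VC rule appears in the head of any GAP rule of $\Pi$, and let $S$ be a state for $\Pi$. Then $\mathcal{MM}(\Pi_S)$ is a coherent model of $\Pi$.
   Context: Fix disjoint sets of unary vertex predicate symbols and binary edge predicate symbols; constants are the vertices of a finite social network. An annotation is an element of $[0,1]$, an annotation variable (ranging over $[0,1]$), or $f(t_1,\dots,t_k)$ for an annotation function symbol $f$ denoting a fixed function $[0,1]^k\to[0,1]$ and annotations $t_i$. An annotated atom is $A:\mu$ with $A$ an atom and $\mu$ an annotation; an annotated (GAP) rule has the form $A_0:f(\mu_1,\dots,\mu_n)\leftarrow A_1:\mu_1,\dots,A_n:\mu_n$ ($n=0$: a fact); a GAP is a finite set of such rules. A vertex choice (VC) rule of size $m$ is $b_1(X),\dots,b_m(X)\hookleftarrow a_1(X),\dots,a_m(X)$ with $a_i,b_i$ vertex predicate symbols; its ground instance for vertex $v$ is $b_1(v),\dots,b_m(v)\hookleftarrow a_1(v),\dots,a_m(v)$. A choice GAP (cGAP) $\Pi$ is a finite set of annotated rules plus exactly one VC rule. An interpretation is a map $I$ from ground atoms to $[0,1]$, ordered pointwise ($I_1\preceq I_2$ iff $I_1(A)\le I_2(A)$ for all $A$). $I\models A:\mu$ iff $I(A)\ge\mu$; $I$ satisfies a ground annotated rule iff $I(A_0)$ is at least the head annotation or some body annotated atom is not satisfied; $I$ satisfies a ground VC rule $B_1,\dots,B_m\hookleftarrow A_1,\dots,A_m$ iff there is $i$ with $I(B_i)=I(A_i)$ and $I(B_j)=0$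 for all $j\neq i$; a non-ground rule is satisfied iff all its ground instances are; a model of $\Pi$ satisfies all its rules. Every GAP $P$ has a unique $\preceq$-minimal model, denoted $\mathcal{MM}(P)$. Coherence transform: for an interpretation $I$, ${\rm coh}(\Pi,I)$ is the GAP consisting of all ground non-VC rules of $\Pi$ together with, for each ground VC-rule instance $B_1(v),\dots,B_m(v)\hookleftarrow A_1(v),\dots,A_m(v)$ and each $i$ with $I(A_i(v))>0$ and $I(A_i(v))=I(B_i(v))$, the rule $B_i(v):\mu\leftarrow A_i(v):\mu$. A model $M$ of $\Pi$ is coherent iff $M=\mathcal{MM}({\rm coh}(\Pi,M))$. Game view: each vertex $v$ is a player $\mathcal P_v$ with action set $Q=\{1,\dots,m\}$ ($m$ the size of the VC rule); a state is a map $S$ from players to $Q$. The induced ground GAP $\Pi_S$ is obtained from the grounding of $\Pi$ by replacing each ground VC-rule instance $b_1(v),\dots,b_m(v)\hookleftarrow a_1(v),\dots,a_m(v)$ by the annotated rule $b_i(v):\mu\leftarrow a_i(v):\mu$ with $i=S(\mathcal P_v)$, keeping all ground non-VC rules. *)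

(* Defs.v *)
From Stdlib Require Import Reals List ClassicalEpsilon.
Import ListNotations.
Open Scope R_scope.

Set Implicit Arguments.

Definition in01 (x : R) : Prop := 0 <= x <= 1.

Section CGAP.

(* V  : vertices (constants) of the social network
   VP : unary vertex predicate symbols
   EP : binary edge predicate symbols (disjoint from VP: separate type)
   F  : annotation function symbols, den f = the fixed function denoted by f *)
Variables (V VP EP F : Type) (den : F -> list R -> R).

Inductive term : Type :=
| TVar (n : nat)
| TCst (v : V).

Inductive atom : Type :=
| AVtx (p : VP) (t : term)
| AEdg (e : EP) (t1 t2 : term).

Inductive gatom : Type :=
| GVtx (p : VP) (v : V)
| GEdg (e : EP) (u v : V).

Inductive ann : Type :=
| AConst (c : R) (Hc : in01 c)
| AVarA (n : nat)
| AFun (f : F) (args : list ann).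

Arguments AConst : clear implicits.

Fixpoint eval_ann (th : nat -> R) (a : ann) : R :=
  match a with
  | AConst c _ => c
  | AVarA n => th n
  | AFun f args => den f (map (eval_ann th) args)
  end.

Record rule : Type := Rule {
  r_head : atom;
  r_hann : ann;
  r_body : list (atom * ann) }.

(** Object-ground annotated rule (annotation variables are instantiated
    at satisfaction time, ranging over [0,1]). *)
Record grule : Type := GRule {
  g_head : gatom;
  g_hann : ann;
  g_body : list (gatom * ann) }.

Definition ggap := grule -> Prop.

Definition inst_term (s : nat -> V) (t : term) : V :=
  match t with TVar n => s n | TCst v => v end.

Definition inst_atom (s : nat -> V) (A : atom) : gatom :=
  match A with
  | AVtx p t => GVtx p (inst_term s t)
  | AEdg e t1 t2 => GEdg e (inst_term s t1) (inst_term s t2)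
  end.

Definition inst_rule (s : nat -> V) (r : rule) : grule :=
  GRule (inst_atom s (r_head r)) (r_hann r)
        (map (fun p => (inst_atom s (fst p), snd p)) (r_body r)).

(** Choice GAP: finitely many annotated rules plus exactly one VC rule
    b_1(X),...,b_m(X) <-' a_1(X),...,a_m(X), stored as [(b_1,a_1);...;(b_m,a_m)]. *)
Record cgap : Type := CGap {
  c_rules : list rule;
  c_vc : list (VP * VP) }.

Definition interp := gatom -> R.
Definition is_interp (I : interp) : Prop := forall A, in01 (I A).

Definition sat_grule (I : interp) (r : grule) : Prop :=
  forall th : nat -> R, (forall n, in01 (th n)) ->
    (forall Am, In Am (g_body r) -> I (fst Am) >= eval_ann th (snd Am)) ->
    I (g_head r) >= eval_ann th (g_hann r).

Definition model_gap (P : ggap) (I : interp) : Prop :=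
  is_interp I /\ forall r, P r -> sat_grule I r.

Definition least_model (P : ggap) (M : interp) : Prop :=
  model_gap P M /\ forall I, model_gap P I -> forall A, M A <= I A.

Definition MM (P : ggap) : interp :=
  epsilon (inhabits (fun _ : gatom => 0)) (least_model P).

Definition ground_rules (Pi : cgap) : ggap :=
  fun g => exists r s, In r (c_rules Pi) /\ g = inst_rule s r.

Definition vc_b (Pi : cgap) (i : nat) : option VP :=
  option_map fst (nth_error (c_vc Pi) i).

Definition copy_rule (b a : VP) (v : V) : grule :=
  GRule (GVtx b v) (AVarA 0) [(GVtx a v, AVarA 0)].

Definition sat_vc (I : interp) (Pi : cgap) (v : V) : Prop :=
  exists i ba, nth_error (c_vc Pi) i = Some ba /\
    I (GVtx (fst ba) v) = I (GVtx (snd ba) v) /\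
    forall j ba', j <> i -> nth_error (c_vc Pi) j = Some ba' ->
      I (GVtx (fst ba') v) = 0.

Definition model_cgap (Pi : cgap) (I : interp) : Prop :=
  is_interp I /\ (forall g, ground_rules Pi g -> sat_grule I g) /\
  (forall v, sat_vc I Pi v).

Definition coh (Pi : cgap) (I : interp) : ggap :=
  fun g => ground_rules Pi g \/
    exists v i ba, nth_error (c_vc Pi) i = Some ba /\
      0 < I (GVtx (snd ba) v) /\ I (GVtx (snd ba) v) = I (GVtx (fst ba) v) /\
      g = copy_rule (fst ba) (snd ba) v.

Definition coherent_model (Pi : cgap) (M : interp) : Prop :=
  model_cgap Pi M /\ M = MM (coh Pi M).

(** States: S v in {0,...,m-1} is the (0-indexed) action of player P_v. *)
Definition is_state (Pi : cgap) (S : V -> nat) : Prop :=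
  forall v, (S v < length (c_vc Pi))%nat.

Definition induced (Pi : cgap) (S : V -> nat) : ggap :=
  fun g => ground_rules Pi g \/
    exists v ba, nth_error (c_vc Pi) (S v) = Some ba /\
      g = copy_rule (fst ba) (snd ba) v.

Definition atom_vpred (A : atom) : option VP :=
  match A with AVtx p _ => Some p | AEdg _ _ _ => None end.

End CGAP.

(* Main.v *)
Require Import Defs.
From Stdlib Require Import Reals List Lra Lia ClassicalEpsilon FunctionalExtensionality.
Open Scope R_scope.
Set Implicit Arguments.

Section Aux.
Variables (V VP EP F : Type) (den : F -> list R -> R).
Hypothesis den01 : forall f l, (forall x, In x l -> in01 x) -> in01 (den f l).

Fixpoint eval01 (th : nat -> R) (Hth : forall n, in01 (th n)) (a : ann F)
  : in01 (eval_ann den th a) :=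
  match a as a0 return in01 (eval_ann den th a0) with
  | @AConst _ c Hc => Hc
  | @AVarA _ n => Hth n
  | @AFun _ f args => den01 f _
      ((fix go (l : list (ann F)) : forall x, In x (map (eval_ann den th) l) -> in01 x :=
         match l as l0 return forall x, In x (map (eval_ann den th) l0) -> in01 x with
         | nil => fun x H => False_ind _ H
         | cons b l' => fun x H =>
             match H with
             | or_introl e => eq_ind _ (fun y => in01 y) (eval01 th Hth b) _ e
             | or_intror H' => go l' x H'
             end
         end) args)
  end.

Definition upd (M : interp V VP EP) (X : gatom V VP EP) (c : R) : interp V VP EP :=
  fun A => if excluded_middle_informative (A = X) then c else M A.

Lemma least_exists (P : ggap V VP EP F) : exists M, least_model den P M.
Proof.
  set (E := fun X z => exists I, model_gap den P I /\ z = - I X).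
  assert (bnd : forall X, bound (E X)).
  { intro X; exists 0; intros z [I [[HI _] ->]]; specialize (HI X); unfold in01 in HI; lra. }
  assert (one : model_gap den P (fun _ => 1)).
  { split. intro; unfold in01; lra.
    intros r _ th Hth _. pose proof (eval01 th Hth (g_hann r)). unfold in01 in *; lra. }
  assert (ne : forall X, exists z, E X z).
  { intro X; exists (-1); exists (fun _ => 1); split; auto. }
  exists (fun X => - proj1_sig (completeness (E X) (bnd X) (ne X))).
  assert (low : forall I, model_gap den P I -> forall X,
      - proj1_sig (completeness (E X) (bnd X) (ne X)) <= I X).
  { intros I HI X. pose proof (proj2_sig (completeness (E X) (bnd X) (ne X))) as [Hm _]; set (m := proj1_sig _) in *.
    assert (- I X <= m) by (apply Hm; exists I; auto). lra. }
  split; [split|].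
  - intro X. pose proof (proj2_sig (completeness (E X) (bnd X) (ne X))) as [Hm Hm2]; set (m := proj1_sig _) in *.
    assert (-1 <= m) by (apply Hm; exists (fun _ => 1); auto).
    assert (m <= 0).
    { apply Hm2. intros z [I [[HI _] ->]]; specialize (HI X); unfold in01 in HI; lra. }
    unfold in01; lra.
  - intros r Hr th Hth Hbody.
    pose proof (proj2_sig (completeness (E (g_head r)) (bnd (g_head r)) (ne (g_head r)))) as [Hm Hm2]; set (m := proj1_sig _) in *.
    assert (m <= - eval_ann den th (g_hann r)).
    { apply Hm2. intros z [I [HI ->]].
      assert (I (g_head r) >= eval_ann den th (g_hann r)).
      { apply (proj2 HI r Hr th Hth). intros Am HAm.
        specialize (Hbody Am HAm). specialize (low I HI (fst Am)). lra. }
      lra. }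
    lra.
  - exact low.
Qed.

Lemma MM_eq (P : ggap V VP EP F) M : least_model den P M -> MM den P = M.
Proof.
  intro H. unfold MM.
  pose proof (epsilon_spec (inhabits (fun _ : gatom V VP EP => 0)) (least_model den P)
                (ex_intro _ M H)) as H0.
  set (M' := epsilon _ _) in *.
  apply functional_extensionality; intro A.
  apply Rle_antisym; [apply (proj2 H0 M (proj1 H)) | apply (proj2 H M' (proj1 H0))].
Qed.

Lemma sat_min I J (r : grule V VP EP F) :
  sat_grule den I r -> sat_grule den J r -> sat_grule den (fun A => Rmin (I A) (J A)) r.
Proof.
  intros HI HJ th Hth Hb.
  assert (I (g_head r) >= eval_ann den th (g_hann r)).
  { apply HI; auto. intros Am HA; specialize (Hb Am HA). pose proof (Rmin_l (I (fst Am)) (J (fst Am))). lra. }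
  assert (J (g_head r) >= eval_ann den th (g_hann r)).
  { apply HJ; auto. intros Am HA; specialize (Hb Am HA). pose proof (Rmin_r (I (fst Am)) (J (fst Am))). lra. }
  unfold Rmin; destruct (Rle_dec _ _); lra.
Qed.

Lemma lower (P : ggap V VP EP F) M X c : least_model den P M -> 0 <= c <= M X ->
  (forall r, P r -> g_head r = X -> sat_grule den (upd M X c) r) -> M X <= c.
Proof.
  intros [[HI HM] Hl] Hc Hr.
  assert (le : forall A, upd M X c A <= M A).
  { intro A; unfold upd; destruct (excluded_middle_informative (A = X)) as [->|]; lra. }
  assert (model_gap den P (upd M X c)).
  { split.
    - intro A; unfold upd; destruct (excluded_middle_informative (A = X)) as [->|]; auto.
      specialize (HI X); unfold in01 in *; lra.
    - intros r Pr. destruct (excluded_middle_informative (g_head r = X)) as [e|ne]; auto.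
      intros th Hth Hb.
      assert (M (g_head r) >= eval_ann den th (g_hann r)).
      { apply (HM r Pr th Hth). intros Am HA; specialize (Hb Am HA); specialize (le (fst Am)); lra. }
      unfold upd; destruct (excluded_middle_informative (g_head r = X)); [contradiction|auto]. }
  specialize (Hl _ H X). unfold upd in Hl.
  destruct (excluded_middle_informative (X = X)); [auto|congruence].
Qed.

Lemma nodup_idx {A B} (f : A -> B) l i j x y :
  NoDup (map f l) -> nth_error l i = Some x -> nth_error l j = Some y -> f x = f y -> i = j.
Proof.
  intros Hn Hi Hj Hf.
  apply (proj1 (NoDup_nth_error _) Hn).
  - rewrite length_map. apply nth_error_Some. congruence.
  - rewrite !nth_error_map, Hi, Hj. simpl. congruence.
Qed.

End Aux.

Theorem mainTheorem2
  (V VP EP F : Type) (den : F -> list R -> R)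
  (* the social network is finite *)
  (Vfin : exists l : list V, forall v, In v l)
  (* each annotation function symbol denotes a function into [0,1] *)
  (den01 : forall f l, (forall x, In x l -> in01 x) -> in01 (den f l))
  (Pi : cgap V VP EP F)
  (* the head predicates b_1,...,b_m of the VC rule are distinct symbols *)
  (Hdist : NoDup (map fst (c_vc Pi)))
  (* no VC-head predicate symbol is the head predicate of a GAP rule *)
  (Hhead : forall r b, In r (c_rules Pi) -> In b (map fst (c_vc Pi)) ->
             atom_vpred (r_head r) <> Some b)
  (S : V -> nat) (HS : is_state Pi S) :
  coherent_model den Pi (MM den (induced Pi S)).
Proof.
  destruct (least_exists den den01 (induced Pi S)) as [M HM].
  rewrite (MM_eq HM).
  pose proof HM as [[HI HMr] Hl].
  assert (Hba : forall v, exists ba, nth_error (c_vc Pi) (S v) = Some ba).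
  { intro v. destruct (nth_error (c_vc Pi) (S v)) eqn:E; eauto.
    exfalso. apply nth_error_None in E. specialize (HS v). lia. }
  assert (nogr : forall r j ba v, ground_rules Pi r -> nth_error (c_vc Pi) j = Some ba ->
            g_head r <> GVtx EP (fst ba) v).
  { intros r j ba v [r0 [s [Hr0 ->]]] Hj He.
    apply (Hhead r0 (fst ba) Hr0).
    - apply in_map. eapply nth_error_In; eauto.
    - destruct (r_head r0) eqn:E; simpl in He; unfold inst_rule in He; simpl in He;
        rewrite E in He; simpl in He; inversion He; reflexivity. }
  assert (F2 : forall v ba, nth_error (c_vc Pi) (S v) = Some ba ->
            M (GVtx EP (snd ba) v) <= M (GVtx EP (fst ba) v)).
  { intros v ba H.
    assert (Hr : induced Pi S (copy_rule EP F (fst ba) (snd ba) v)) by (right; eauto).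
    specialize (HMr _ Hr (fun _ => M (GVtx EP (snd ba) v)) (fun _ => HI _)).
    simpl in HMr. apply Rge_le, HMr. intros Am [<-|[]]; simpl; lra. }
  assert (F3 : forall v ba, nth_error (c_vc Pi) (S v) = Some ba ->
            M (GVtx EP (fst ba) v) = M (GVtx EP (snd ba) v)).
  { intros v ba H. apply Rle_antisym; [|auto].
    apply (lower HM).
    - pose proof (HI (GVtx EP (snd ba) v)); unfold in01 in *; split; [lra|auto].
    - intros r [Hg|[w [ba' [Hw ->]]]] Hh.
      + exfalso; eapply nogr; eauto.
      + simpl in Hh. inversion Hh; subst w. rewrite H in Hw. inversion Hw; subst ba'.
        intros th Hth Hb. simpl in *. specialize (Hb _ (or_introl eq_refl)). simpl in Hb.
        unfold upd in *.
        destruct (excluded_middle_informative (GVtx EP (snd ba) v = GVtx EP (fst ba) v)) as [e|ne];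
        destruct (excluded_middle_informative (GVtx EP (fst ba) v = GVtx EP (fst ba) v)); try congruence;
        try rewrite e in Hb; lra. }
  assert (F4 : forall v j ba, j <> S v -> nth_error (c_vc Pi) j = Some ba ->
            M (GVtx EP (fst ba) v) = 0).
  { intros v j ba Hj H. apply Rle_antisym.
    - apply (lower HM).
      + pose proof (HI (GVtx EP (fst ba) v)); unfold in01 in *; lra.
      + intros r [Hg|[w [ba' [Hw ->]]]] Hh.
        * exfalso; eapply nogr; eauto.
        * simpl in Hh. inversion Hh; subst w. exfalso. apply Hj.
          eapply (nodup_idx fst); eauto.
    - pose proof (HI (GVtx EP (fst ba) v)); unfold in01 in *; lra. }
  assert (Hmod : model_cgap den Pi M).
  { split; [auto|split].
    - intros g Hg. apply HMr. left; auto.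
    - intro v. destruct (Hba v) as [ba Hb]. exists (S v), ba. split; [auto|split].
      + apply F3; auto.
      + intros j ba' Hj Hj'. eapply F4; eauto. }
  split; [exact Hmod|].
  symmetry. apply MM_eq. split; [split|].
  - auto.
  - intros r [Hg|[v [i [ba [Hi [Hpos [Heq ->]]]]]]].
    + apply HMr; left; auto.
    + intros th Hth Hb. simpl in *. specialize (Hb _ (or_introl eq_refl)). simpl in Hb. lra.
  - intros I [HII HIr] A.
    set (J := fun A => Rmin (I A) (M A)).
    assert (HJ : model_gap den (induced Pi S) J).
    { split.
      - intro B. specialize (HII B); specialize (HI B); unfold J, in01 in *.
        unfold Rmin; destruct (Rle_dec _ _); lra.
      - intros r [Hg|[v [ba [Hv ->]]]].
        + apply sat_min; [apply HIr; left; auto | apply HMr; left; auto].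
        + destruct (Rlt_le_dec 0 (M (GVtx EP (snd ba) v))) as [Hp|Hn].
          * apply sat_min.
            -- apply HIr. right. exists v, (S v), ba. repeat split; auto.
               symmetry; apply F3; auto.
            -- apply HMr. right; eauto.
          * intros th Hth Hb. simpl in *. specialize (Hb _ (or_introl eq_refl)). simpl in Hb.
            unfold J in *. pose proof (Rmin_r (I (GVtx EP (snd ba) v)) (M (GVtx EP (snd ba) v))).
            pose proof (HII (GVtx EP (fst ba) v)); pose proof (HI (GVtx EP (fst ba) v)).
            unfold in01 in *. unfold Rmin; destruct (Rle_dec _ _); lra. }
    specialize (Hl J HJ A). unfold J in Hl. pose proof (Rmin_l (I A) (M A)). lra.
Qed.
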